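(* Let the setting, algorithm and notation be as described in the context, and assume $\frac12\widehat\Sigma_g+T\succeq0$. Then for every $k\ge1$, \[ (1-\tau)\sigma\|r^{k+1}\|^2+\sigma\|A^*x^{k+1}+B^*y^k-c\|^2\ \ge\ \max(1-\tau,1-\tau^{-1})\,\sigma\big(\|r^{k+1}\|^2-\|r^k\|^2\big)+(\xi_{k+1}-\xi_k)+\min(\tau,1+\tau-\tau^2)\,\sigma\big(\tau^{-1}\|r^{k+1}\|^2+\|B^*(y^{k+1}-y^k)\|^2\big). \]
   Context: Let $\mathcal X,\mathcal Y,\mathcal Z$ be finite-dimensional real Euclidean spaces with inner products $\langle\cdot,\cdot\rangle$ and induced norms $\|\cdot\|$. Let $p:\mathcal X\to(-\infty,+\infty]$ and $q:\mathcal Y\to(-\infty,+\infty]$ be closed proper convex functions, and let $f:\mathcal X\to\mathbb R$, $g:\mathcal Y\to\mathbb R$ be convex differentiable functions with Lipschitz continuous gradients. Let $A:\mathcal Z\to\mathcal X$, $B:\mathcal Z\to\mathcal Y$ be linear maps with adjoints $A^*,B^*$, and $c\in\mathcal Z$. Let $\Sigma_f,\widehat\Sigma_f$ (on $\mathcal X$) and $\Sigma_g,\widehat\Sigma_g$ (on $\mathcal Y$) be self-adjoint positive semidefinite linear operators with $\widehat\Sigma_f\succeq\Sigma_f$, $\widehat\Sigma_g\succeq\Sigma_g$, such that for all $x,x'\in\mathcal X$, $y,y'\in\mathcal Y$: $f(x')+\langle x-x',\nabla f(x')\rangle+\frac12\|x-x'\|^2_{\Sigma_f}\le f(x)\le f(x')+\langle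 x-x',\nabla f(x')\rangle+\frac12\|x-x'\|^2_{\widehat\Sigma_f}$ and the analogous two inequalities for $g$ with $\Sigma_g,\widehat\Sigma_g$. For a self-adjoint (possibly indefinite) operator $G$, $\|u\|_G^2:=\langle u,Gu\rangle$. Algorithm (Majorized iPADMM): let $\sigma>0$, $\tau>0$, and let $S:\mathcal X\to\mathcal X$, $T:\mathcal Y\to\mathcal Y$ be self-adjoint, possibly indefinite, linear operators with $\widehat\Sigma_f+S+\sigma AA^*\succeq0$ and $\widehat\Sigma_g+T+\sigma BB^*\succeq0$. Starting from $(x^0,y^0,z^0)\in\mathrm{dom}(p)\times\mathrm{dom}(q)\times\mathcal Z$, for $k=0,1,\dots$: $x^{k+1}\in\arg\min_{x}\{p(x)+\langle\nabla f(x^k),x\rangle+\frac12\|x-x^k\|^2_{\widehat\Sigma_f+S}+\langle z^k,A^*x\rangle+\frac\sigma2\|A^*x+B^*y^k-c\|^2\}$, $y^{k+1}\in\arg\min_{y}\{q(y)+\langle\nabla g(y^k),y\rangle+\frac12\|y-y^k\|^2_{\widehat\Sigma_g+T}+\langle z^k,B^*y\rangle+\frac\sigma2\|A^*x^{k+1}+B^*y-c\|^2\}$, $z^{k+1}=z^k+\tau\sigma(A^*x^{k+1}+B^*y^{k+1}-c)$ (the minimizers are assumed to exist). Notation: $r^k:=A^*x^k+B^*y^k-c$ and $\xi_{k+1}:=\|y^{k+1}-y^k\|^2_{\widehat\Sigma_g+T}$. *)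

(* Defs.v *)
(* finite-dimensional Euclidean spaces are rendered as column
   vectors 'cV[R]_n with the standard inner product; linear maps as matrices,
   adjoints as transposes; extended-real valued functions via \bar R. *)
From mathcomp Require Import all_boot all_order all_algebra.
From mathcomp Require Import reals constructive_ereal.
Set Implicit Arguments. Unset Strict Implicit. Unset Printing Implicit Defensive.
Import Order.TTheory GRing.Theory Num.Theory.
Local Open Scope ring_scope.

Section Defs.
Variable R : realType.

Definition ip n (u v : 'cV[R]_n) : R := (u^T *m v) 0 0.
Definition sqn n (u : 'cV[R]_n) : R := ip u u.
Definition enorm n (u : 'cV[R]_n) : R := Num.sqrt (sqn u).
Definition qf n (G : 'M[R]_n) (u : 'cV[R]_n) : R := ip u (G *m u).

Definition self_adjoint n (G : 'M[R]_n) : Prop := G^T = G.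
Definition psd n (G : 'M[R]_n) : Prop := self_adjoint G /\ forall u, 0 <= qf G u.

Definition convex_fun n (f : 'cV[R]_n -> R) : Prop :=
  forall x y (t : R), 0 <= t <= 1 -> f (t *: x + (1 - t) *: y) <= t * f x + (1 - t) * f y.

Definition has_gradient n (f : 'cV[R]_n -> R) (gf : 'cV[R]_n -> 'cV[R]_n) : Prop :=
  forall x (e : R), 0 < e -> exists2 d : R, 0 < d &
    forall h, enorm h < d -> `|f (x + h) - f x - ip (gf x) h| <= e * enorm h.

Definition lipschitz n (F : 'cV[R]_n -> 'cV[R]_n) : Prop :=
  exists L : R, forall x x', enorm (F x - F x') <= L * enorm (x - x').

Definition never_minfty n (p : 'cV[R]_n -> \bar R) : Prop := forall x, p x != -oo%E.
Definition proper_fun n (p : 'cV[R]_n -> \bar R) : Prop :=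
  never_minfty p /\ exists x, (p x < +oo)%E.
Definition econvex_fun n (p : 'cV[R]_n -> \bar R) : Prop :=
  forall (x y : 'cV[R]_n) (t : R), 0 <= t <= 1 ->
    (p (t *: x + (1 - t) *: y)%R <= t%:E * p x + (1 - t)%:E * p y)%E.
(* closed = lower semicontinuous *)
Definition lsc_fun n (p : 'cV[R]_n -> \bar R) : Prop :=
  forall x (a : R), (a%:E < p x)%E -> exists2 d : R, 0 < d &
    forall y, enorm (y - x) < d -> (a%:E < p y)%E.
Definition closed_proper_convex n (p : 'cV[R]_n -> \bar R) : Prop :=
  [/\ proper_fun p, econvex_fun p & lsc_fun p].
Definition in_dom n (p : 'cV[R]_n -> \bar R) (x : 'cV[R]_n) : Prop := (p x < +oo)%E.

Definition is_argmin n (Phi : 'cV[R]_n -> \bar R) (x : 'cV[R]_n) : Prop :=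
  forall x', (Phi x <= Phi x')%E.

End Defs.

(* Main.v *)
Require Import Defs.
From mathcomp Require Import all_boot all_order all_algebra.
From mathcomp Require Import reals constructive_ereal.
From mathcomp Require Import ring lra.
Import Order.TTheory GRing.Theory Num.Theory.
Local Open Scope ring_scope.
Set Implicit Arguments. Unset Strict Implicit.


Section IP.
Variable R : realType.
Variable n : nat.
Implicit Types u v w : 'cV[R]_n.

Lemma ipC u v : ip u v = ip v u.
Proof. by rewrite /ip -[u^T *m v]trmxK trmx_mul trmxK mxE. Qed.
Lemma ipDl u v w : ip (u + v) w = ip u w + ip v w.
Proof. by rewrite /ip linearD /= mulmxDl mxE. Qed.
Lemma ipDr u v w : ip w (u + v) = ip w u + ip w v.
Proof. by rewrite /ip mulmxDr mxE. Qed.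
Lemma ipZl (a : R) u v : ip (a *: u) v = a * ip u v.
Proof. by rewrite /ip linearZ /= -scalemxAl mxE. Qed.
Lemma ipZr (a : R) u v : ip u (a *: v) = a * ip u v.
Proof. by rewrite /ip -scalemxAr mxE. Qed.
Lemma ipNl u v : ip (- u) v = - ip u v.
Proof. by rewrite -scaleN1r ipZl mulN1r. Qed.
Lemma ipNr u v : ip u (- v) = - ip u v.
Proof. by rewrite -scaleN1r ipZr mulN1r. Qed.
Lemma ipBl u v w : ip (u - v) w = ip u w - ip v w.
Proof. by rewrite ipDl ipNl. Qed.
Lemma ipBr u v w : ip w (u - v) = ip w u - ip w v.
Proof. by rewrite ipDr ipNr. Qed.
Lemma sqn_ge0 u : 0 <= sqn u.
Proof.
rewrite /sqn /ip mxE; apply: sumr_ge0 => i _; by rewrite mxE -expr2 sqr_ge0.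
Qed.
End IP.

Lemma ip_mul (R : realType) m n (M : 'M[R]_(m, n)) u v :
  ip u (M *m v) = ip (M^T *m u) v.
Proof. by rewrite /ip mulmxA trmx_mul trmxK. Qed.

Section QF.
Variable R : realType.
Variable n : nat.
Implicit Types u v w : 'cV[R]_n.

Lemma qfD (G1 G2 : 'M[R]_n) u : qf (G1 + G2) u = qf G1 u + qf G2 u.
Proof. by rewrite /qf mulmxDl ipDr. Qed.
Lemma qfZ (a : R) (G : 'M[R]_n) u : qf (a *: G) u = a * qf G u.
Proof. by rewrite /qf -scalemxAl ipZr. Qed.
Lemma qfsym (G : 'M[R]_n) u v : self_adjoint G -> ip u (G *m v) = ip (G *m u) v.
Proof. by move=> hG; rewrite ip_mul hG. Qed.
Lemma qf_lin (G : 'M[R]_n) u e (t : R) : self_adjoint G ->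
  qf G (u + t *: e) = qf G u + 2 * t * ip (G *m u) e + t ^+ 2 * qf G e.
Proof.
move=> hG; rewrite /qf mulmxDr -scalemxAr !ipDl !ipDr !ipZl !ipZr.
rewrite (qfsym u e hG) [ip e (G *m u)]ipC; ring.
Qed.
Lemma qf_scal (G : 'M[R]_n) u (t : R) : qf G (t *: u) = t ^+ 2 * qf G u.
Proof. by rewrite /qf -scalemxAr ipZl ipZr mulrA -expr2. Qed.
Lemma qfB (G : 'M[R]_n) u v : self_adjoint G ->
  qf G (u - v) = qf G u - 2 * ip (G *m v) u + qf G v.
Proof.
move=> hG; rewrite -(scaleN1r v) (qf_lin _ _ _ hG) -(qfsym u v hG) [ip u (G *m v)]ipC; ring.
Qed.
Lemma sqn_lin u e (t : R) : sqn (u + t *: e) = sqn u + 2 * t * ip u e + t ^+ 2 * sqn e.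
Proof.
by rewrite /sqn !ipDl !ipDr !ipZl !ipZr [ip e u]ipC; ring.
Qed.
End QF.


Definition Hq (R : realType) ny nz (a yc : 'cV[R]_ny) (G : 'M[R]_ny)
  (zz : 'cV[R]_nz) (B : 'M[R]_(ny, nz)) (P c : 'cV[R]_nz) (sigma : R)
  (v : 'cV[R]_ny) : R :=
  ip a v + qf G (v - yc) / 2 + ip zz (B^T *m v) + sigma / 2 * sqn (P + B^T *m v - c).

Lemma Hq_lin (R : realType) ny nz (a yc : 'cV[R]_ny) (G : 'M[R]_ny)
  (zz : 'cV[R]_nz) (B : 'M[R]_(ny, nz)) (P c : 'cV[R]_nz) (sigma : R)
  (v e : 'cV[R]_ny) (t : R) : self_adjoint G ->
  Hq a yc G zz B P c sigma (v + t *: e) - Hq a yc G zz B P c sigma v =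
  t * (ip a e + ip (G *m (v - yc)) e + ip zz (B^T *m e)
       + sigma * ip (P + B^T *m v - c) (B^T *m e))
  + t ^+ 2 * (qf G e / 2 + sigma / 2 * sqn (B^T *m e)).
Proof.
move=> hG; rewrite /Hq.
have ->: v + t *: e - yc = (v - yc) + t *: e.
  by apply/matrixP => i j; rewrite !mxE; ring.
have ->: P + B^T *m (v + t *: e) - c = (P + B^T *m v - c) + t *: (B^T *m e).
  rewrite mulmxDr -scalemxAr.
  by apply/matrixP => i j; rewrite !mxE; ring.
rewrite (qf_lin _ _ _ hG) sqn_lin (mulmxDr B^T) -scalemxAr ![ip a _]ipDr ![ip zz _]ipDr !ipZr.
by field.
Qed.

Lemma quad_lim (R : realType) (a b : R) :
  (forall t : R, 0 < t -> t <= 1 -> 0 <= a * t + b * t ^+ 2) -> 0 <= a.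
Proof.
move=> H; rewrite leNgt; apply/negP => ha.
pose u := - a. pose M := `|b| + 1.
have hu : 0 < u by rewrite /u oppr_gt0.
have hb : b <= `|b| := ler_norm b.
have hb0 : 0 <= `|b| := normr_ge0 b.
have hM : 0 < M by rewrite /M; lra.
have hbM : b < M by rewrite /M; lra.
have huM : 0 < u + M by lra.
pose t := u / (u + M).
have ht0 : 0 < t by rewrite /t divr_gt0.
have htu : t * (u + M) = u by rewrite /t mulfVK // gt_eqF.
have ht1 : t <= 1 by rewrite /t ler_pdivrMr //; lra.
have h1 := H t ht0 ht1.
have h2 : 0 <= a + b * t.
  have -> : a + b * t = (a * t + b * t ^+ 2) / t by field; rewrite gt_eqF.
  by rewrite divr_ge0 // ltW.
have h3 : 0 <= (a + b * t) * (u + M) by rewrite mulr_ge0 // ltW.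
have h4 : (a + b * t) * (u + M) = u * (b - u - M).
  by rewrite mulrDl -mulrA htu /u; ring.
move: h3; rewrite h4 => h3.
have : 0 < u * (M + u - b) by rewrite mulr_gt0 //; lra.
lra.
Qed.

Lemma g_coco (R : realType) n (g : 'cV[R]_n -> R) (gg : 'cV[R]_n -> 'cV[R]_n)
  (Sg Sgh : 'M[R]_n) : psd Sg ->
  (forall v v', g v' + ip (v - v') (gg v') + qf Sg (v - v') / 2 <= g v /\
                g v <= g v' + ip (v - v') (gg v') + qf Sgh (v - v') / 2) ->
  forall x x' vv, - (qf Sgh vv / 4) <= ip (gg x - gg x') (x - x' + vv).
Proof.
move=> [_ hSg] hg x x' vv.
pose u := (- 2^-1 : R) *: vv. pose u' := (2^-1 : R) *: vv.
have [l1 _] := hg (x' + u) x.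
have [_ u2] := hg (x' + u) x'.
have [l3 _] := hg (x + u') x'.
have [_ u4] := hg (x + u') x.
have q1 := hSg (x' + u - x). have q3 := hSg (x + u' - x').
move: u2 u4; rewrite [x' + u - x']addrAC subrr add0r [x + u' - x]addrAC subrr add0r !qf_scal => u2 u4.
move: l1 l3 u2 u4 q1 q3; rewrite /u /u' !ipBl !ipDl !ipZl => l1 l3 u2 u4 q1 q3.
rewrite [ip (gg x) _]ipC [ip (gg x') _]ipC !ipDl ?ipBl ?ipNl.
lra.
Qed.

Lemma argmin_fin (R : realType) n (q : 'cV[R]_n -> \bar R) (H : 'cV[R]_n -> R) y1 :
  closed_proper_convex q -> is_argmin (fun v => q v + (H v)%:E)%E y1 ->
  exists Q, q y1 = Q%:E.
Proof.
move=> [[hninf [x0 hx0]] _ _] hmin.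
have h := hmin x0.
move: (hninf y1) (hninf x0) hx0 h.
case: (q y1) => [Q| |] //; first by exists Q.
by case: (q x0).
Qed.

Lemma argmin_step (R : realType) n (q : 'cV[R]_n -> \bar R) (H : 'cV[R]_n -> R)
  y1 v Q1 Qv : econvex_fun q -> is_argmin (fun v => q v + (H v)%:E)%E y1 ->
  q y1 = Q1%:E -> q v = Qv%:E -> forall t, 0 <= t <= 1 ->
  t * (Q1 - Qv) <= H (t *: v + (1 - t) *: y1) - H y1.
Proof.
move=> hconv hmin hy1 hv t ht.
have h := hmin (t *: v + (1 - t) *: y1).
have hc := hconv v y1 t ht.
rewrite hv hy1 -!EFinM -EFinD in hc.
have h2 := le_trans h (leeD2r (H (t *: v + (1 - t) *: y1))%:E hc).
move: h2; rewrite hy1 -!EFinD lee_fin => h2.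
lra.
Qed.

Lemma sqnB (R : realType) n (u w : 'cV[R]_n) : sqn (u - w) = sqn u - 2 * ip u w + sqn w.
Proof. by rewrite -(scaleN1r w) sqn_lin; ring. Qed.

Lemma combine (R : realType) ny nz (a1 yc1 a0 yc0 : 'cV[R]_ny) (G : 'M[R]_ny)
  (zz1 zz0 : 'cV[R]_nz) (B : 'M[R]_(ny, nz)) (P1 P0 c : 'cV[R]_nz) (sigma : R)
  (y1 y0 : 'cV[R]_ny) (Q1 Q0 : R) : self_adjoint G ->
  (forall t, 0 <= t <= 1 -> t * (Q1 - Q0) <=
     Hq a1 yc1 G zz1 B P1 c sigma (t *: y0 + (1 - t) *: y1) - Hq a1 yc1 G zz1 B P1 c sigma y1) ->
  (forall t, 0 <= t <= 1 -> t * (Q0 - Q1) <=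
     Hq a0 yc0 G zz0 B P0 c sigma (t *: y1 + (1 - t) *: y0) - Hq a0 yc0 G zz0 B P0 c sigma y0) ->
  0 <= (ip a1 (y0 - y1) + ip (G *m (y1 - yc1)) (y0 - y1) + ip zz1 (B^T *m (y0 - y1))
        + sigma * ip (P1 + B^T *m y1 - c) (B^T *m (y0 - y1)))
     + (ip a0 (y1 - y0) + ip (G *m (y0 - yc0)) (y1 - y0) + ip zz0 (B^T *m (y1 - y0))
        + sigma * ip (P0 + B^T *m y0 - c) (B^T *m (y1 - y0))).
Proof.
move=> hG s1 s0.
apply: (quad_lim (b := (qf G (y0 - y1) / 2 + sigma / 2 * sqn (B^T *m (y0 - y1)))
                     + (qf G (y1 - y0) / 2 + sigma / 2 * sqn (B^T *m (y1 - y0))))).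
move=> t ht0 ht1.
have ht : 0 <= t <= 1 by apply/andP; split => //; exact: ltW.
have := s1 t ht; have := s0 t ht.
have -> : t *: y0 + (1 - t) *: y1 = y1 + t *: (y0 - y1).
  by apply/matrixP => i j; rewrite !mxE; ring.
have -> : t *: y1 + (1 - t) *: y0 = y0 + t *: (y1 - y0).
  by apply/matrixP => i j; rewrite !mxE; ring.
rewrite !Hq_lin //.
lra.
Qed.

Unset Implicit Arguments. Set Strict Implicit.

Theorem lemma3p3 (R : realType) (nx ny nz : nat)
  (p : 'cV[R]_nx -> \bar R) (q : 'cV[R]_ny -> \bar R)
  (f : 'cV[R]_nx -> R) (gf : 'cV[R]_nx -> 'cV[R]_nx)
  (g : 'cV[R]_ny -> R) (gg : 'cV[R]_ny -> 'cV[R]_ny)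
  (A : 'M[R]_(nx, nz)) (B : 'M[R]_(ny, nz)) (c : 'cV[R]_nz)
  (Sf Sfh S : 'M[R]_nx) (Sg Sgh T : 'M[R]_ny) (sigma tau : R)
  (x : nat -> 'cV[R]_nx) (y : nat -> 'cV[R]_ny) (z : nat -> 'cV[R]_nz) :
  closed_proper_convex p -> closed_proper_convex q ->
  convex_fun f -> has_gradient f gf -> lipschitz gf ->
  convex_fun g -> has_gradient g gg -> lipschitz gg ->
  psd Sf -> psd Sfh -> psd (Sfh - Sf) ->
  psd Sg -> psd Sgh -> psd (Sgh - Sg) ->
  (forall u u', f u' + ip (u - u') (gf u') + qf Sf (u - u') / 2 <= f u /\
                f u <= f u' + ip (u - u') (gf u') + qf Sfh (u - u') / 2) ->
  (forall v v', g v' + ip (v - v') (gg v') + qf Sg (v - v') / 2 <= g v /\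
                g v <= g v' + ip (v - v') (gg v') + qf Sgh (v - v') / 2) ->
  0 < sigma -> 0 < tau ->
  self_adjoint S -> self_adjoint T ->
  psd (Sfh + S + sigma *: (A *m A^T)) -> psd (Sgh + T + sigma *: (B *m B^T)) ->
  psd (2^-1 *: Sgh + T) ->
  in_dom p (x 0%N) -> in_dom q (y 0%N) ->
  (forall k : nat,
     is_argmin (fun u => p u + (ip (gf (x k)) u + qf (Sfh + S) (u - x k) / 2
                 + ip (z k) (A^T *m u)
                 + sigma / 2 * sqn (A^T *m u + B^T *m y k - c))%:E)%E (x k.+1)) ->
  (forall k : nat,
     is_argmin (fun v => q v + (ip (gg (y k)) v + qf (Sgh + T) (v - y k) / 2
                 + ip (z k) (B^T *m v)
                 + sigma / 2 * sqn (A^T *m x k.+1 + B^T *m v - c))%:E)%E (y k.+1)) ->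
  (forall k : nat,
     z k.+1 = z k + (tau * sigma) *: (A^T *m x k.+1 + B^T *m y k.+1 - c)) ->
  let r k := A^T *m x k + B^T *m y k - c in
  let xi k := qf (Sgh + T) (y k - y k.-1) in
  forall k : nat, (1 <= k)%N ->
    (1 - tau) * sigma * sqn (r k.+1) + sigma * sqn (A^T *m x k.+1 + B^T *m y k - c)
    >= Num.max (1 - tau) (1 - tau^-1) * sigma * (sqn (r k.+1) - sqn (r k))
       + (xi k.+1 - xi k)
       + Num.min tau (1 + tau - tau ^+ 2) * sigma
           * (tau^-1 * sqn (r k.+1) + sqn (B^T *m (y k.+1 - y k))).
Proof.
move=> _ hq _ _ _ _ _ _ _ _ _ hSg hSgh _ _ hg hsig htau _ hT _ _ hhalf _ _ _ hy hz.
move=> r xi k hk; rewrite /r /xi /= {r xi}.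
case: k hk => [//|k] _.
have hGs : self_adjoint (Sgh + T).
  by rewrite /self_adjoint linearD /= hSgh.1 hT.
have [_ hqc _] := hq.
have hy1 : is_argmin (fun v => q v + (Hq (gg (y k.+1)) (y k.+1) (Sgh + T) (z k.+1) B
              (A^T *m x k.+2) c sigma v)%:E)%E (y k.+2) := hy k.+1.
have hy0 : is_argmin (fun v => q v + (Hq (gg (y k)) (y k) (Sgh + T) (z k) B
              (A^T *m x k.+1) c sigma v)%:E)%E (y k.+1) := hy k.
have [Q1 hQ1] := argmin_fin hq hy1.
have [Q0 hQ0] := argmin_fin hq hy0.
have s1 := argmin_step hqc hy1 hQ1 hQ0.
have s0 := argmin_step hqc hy0 hQ0 hQ1.
have hL := combine hGs s1 s0.
have hc := g_coco hSg hg (y k.+1) (y k) ((y k.+2 - y k.+1) - (y k.+1 - y k)).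
move: hL; rewrite -(opprB (y k.+2) (y k.+1)) (hz k).
set d := y k.+2 - y k.+1.
set d' := y k.+1 - y k.
set G := Sgh + T.
set rv := A^T *m x k.+2 + B^T *m y k.+2 - c.
set r0v := A^T *m x k.+1 + B^T *m y k.+1 - c.
rewrite !mulmxN !ipNr ipDl ipZl [ip (G *m d) d]ipC -[ip d (G *m d)]/(qf G d) => hL.
move: hc; rewrite [d' + _]addrC subrK ipBl => hc.
have e1 := qfB d d' hGs.
have e2 : qf G (d - d') = qf Sgh (d - d') + qf T (d - d') by rewrite /G qfD.
have hh := hhalf.2 (d - d'); rewrite qfD qfZ in hh.
set w := B^T *m d.
have key : 2 * sigma * ip rv w <= qf G d' - qf G d + 2 * (1 - tau) * sigma * ip r0v w.
  lra.
have hrw : A^T *m x k.+2 + B^T *m y k.+1 - c = rv - w.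
  rewrite /rv /w /d mulmxBr.
  by apply/matrixP=> i j; rewrite !mxE; ring.
rewrite hrw (sqnB rv w).
have q1 := sqn_ge0 (w - r0v); rewrite sqnB [ip w r0v]ipC in q1.
have q2 := sqn_ge0 (r0v + tau *: w); rewrite sqn_lin in q2.
have hti : tau * tau^-1 = 1 by rewrite mulfV // gt_eqF.
case: (lerP tau 1) => ht.
  rewrite max_l; last first.
    have : 1 <= tau^-1 by rewrite invf_ge1.
    lra.
  rewrite min_l; last by nra.
  have ee : tau * sigma * (tau^-1 * sqn rv + sqn w) = sigma * sqn rv + tau * sigma * sqn w.
    by field; rewrite gt_eqF.

  rewrite ee.
  have f1 : 0 <= sigma * (1 - tau) * (sqn w - 2 * ip r0v w + sqn r0v).
    by apply: mulr_ge0 => //; apply: mulr_ge0; lra.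
  lra.
rewrite max_r; last first.
  have : tau^-1 <= 1 by rewrite invf_le1 // ltW.
  lra.
rewrite min_r; last by nra.
have f2 : 0 <= sigma * (tau - 1) * tau^-1 * (sqn r0v + 2 * tau * ip r0v w + tau ^+ 2 * sqn w).
  apply: mulr_ge0 => //; apply: mulr_ge0; last by rewrite invr_ge0 ltW.
  apply: mulr_ge0; lra.
have E2 : sigma * (tau - 1) * tau^-1 * (sqn r0v + 2 * tau * ip r0v w + tau ^+ 2 * sqn w)
   = sigma * (tau - 1) * tau * sqn w + 2 * sigma * (tau - 1) * ip r0v w
     + sigma * (1 - tau^-1) * sqn r0v.
  by field; rewrite gt_eqF.
rewrite E2 in f2.
have E : (1 - tau^-1) * sigma * (sqn rv - sqn r0v) + (qf G d - qf G d')
   + (1 + tau - tau ^+ 2) * sigma * (tau^-1 * sqn rv + sqn w)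
   = (2 - tau) * sigma * sqn rv - (1 - tau^-1) * sigma * sqn r0v
     + (1 + tau - tau ^+ 2) * sigma * sqn w + (qf G d - qf G d').
  by field; rewrite gt_eqF.
rewrite E.
lra.
Qed.
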